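(* There is an absolute constant $c_0>0$ such that if $\kappa\le c_0$, $B\sqrt\Gamma\le c_0\kappa$, and $s\Delta>4\pi$ with $\Delta=12B\Gamma/\kappa$, then $$\mathcal B_{\rm SW}\subseteq\bigcup_{i=1}^s\Bigl(\mathcal B_0^{(i)}\cup\bigcup_{\alpha=1}^3\bigcup_{j=1}^B\mathcal B^{(i)}_{\alpha,j}\Bigr).$$
   Context: Angles $\theta_{\boldsymbol r}$ with $\boldsymbol S_{\boldsymbol r}=(\cos\theta_{\boldsymbol r},\sin\theta_{\boldsymbol r})$, $S^{(\alpha)}_{\boldsymbol r}=\cos(\theta_{\boldsymbol r}-\phi_\alpha)$ with $\phi_1=0,\phi_2=\tfrac{2\pi}3,\phi_3=-\tfrac{2\pi}3$ (directions of $\hat{\mathrm a},\hat{\mathrm b},\hat{\mathrm c}$). $\Lambda_B=\{0,\dots,B\}^3$. The block is good if (a) $|S^{(\alpha)}_{\boldsymbol r}-S^{(\alpha)}_{\boldsymbol r+\hat{\mathrm e}_\alpha}|<\Gamma$ for all nearest-neighbour pairs in $\Lambda_B$ and (b) for some $\tau\in\{1,\dots,6\}$, $|\theta_{\boldsymbol r}-\tfrac\pi3\tau|<2\kappa$ (mod $2\pi$) for all $\boldsymbol r\in\Lambda_B$; $\mathcal B$ is the complement (bad). $\mathcal B_{\rm E}$ is the event that $|S^{(\alpha)}_{\boldsymbol r}-S^{(\alpha)}_{\boldsymbol r+\hat{\mathrm e}_\alpha}|\ge\Gamma$ for some pair in $\Lambda_B$, and $\mathcal B_{\rm SW}=\mathcal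 B\setminus\mathcal B_{\rm E}$. Let $\theta^\star_1,\dots,\theta^\star_s$ be $s$ uniformly spaced points on the circle. $\mathcal B^{(i)}_0$ is the event that the block is bad and $|\theta_{\boldsymbol r}-\theta_i^\star|<\Delta$ for all $\boldsymbol r\in\Lambda_B$. For $\alpha\in\{1,2,3\}$ and $j\in\{1,\dots,B\}$, let $\mathbb H_j$ be the set of sites whose $\alpha$-th coordinate equals $j$, and $\tilde\theta_i^\star=2\phi_\alpha-\theta_i^\star$. If the angle between $\theta^\star_i$ and $\phi_\alpha$ lies in $(-\kappa,\kappa)$ or $(\pi-\kappa,\pi+\kappa)$ (mod $2\pi$), $\mathcal B^{(i)}_{\alpha,j}=\emptyset$; otherwise $\mathcal B^{(i)}_{\alpha,j}$ is the set of configurations in $\mathcal B_{\rm SW}$ with $|\theta_{\boldsymbol r}-\theta^\star_i|<\Delta$ for all $\boldsymbol r\in\Lambda_B\cap\mathbb H_{j-1}$ and $|\theta_{\boldsymbol r}-\tilde\theta^\star_i|<\Delta$ for all $\boldsymbol r\in\Lambda_B\cap\mathbb H_j$. *)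

(* Defs.v *)
From Stdlib Require Import Reals ZArith Lia.
Open Scope R_scope.

(* Sites of Z^3 restricted to nonnegative coordinates (Lambda_B lives there). *)
Definition site : Type := (nat * nat * nat)%type.

Definition coord (a : nat) (r : site) : nat :=
  match r with (x, y, z) =>
    match a with 1%nat => x | 2%nat => y | _ => z end end.

Definition shift (a : nat) (r : site) : site :=
  match r with (x, y, z) =>
    match a with 1%nat => (S x, y, z) | 2%nat => (x, S y, z) | _ => (x, y, S z) end end.

Definition in_box (B : nat) (r : site) : Prop :=
  (coord 1 r <= B)%nat /\ (coord 2 r <= B)%nat /\ (coord 3 r <= B)%nat.

Definition phi (a : nat) : R :=
  match a with 1%nat => 0 | 2%nat => 2 * PI / 3 | _ => - (2 * PI / 3) end.

Definition Scomp (a : nat) (t : R) : R := cos (t - phi a).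

Definition near_mod (x y d : R) : Prop :=
  exists k : Z, Rabs (x - y - 2 * PI * IZR k) < d.

Definition config : Type := site -> R.

Definition cond_a (Gam : R) (B : nat) (th : config) : Prop :=
  forall (a : nat) (r : site), (1 <= a <= 3)%nat -> in_box B r -> in_box B (shift a r) ->
    Rabs (Scomp a (th r) - Scomp a (th (shift a r))) < Gam.

Definition cond_b (kap : R) (B : nat) (th : config) : Prop :=
  exists tau : nat, (1 <= tau <= 6)%nat /\
    forall r, in_box B r -> near_mod (th r) (PI / 3 * INR tau) (2 * kap).

Definition good (kap Gam : R) (B : nat) (th : config) : Prop :=
  cond_a Gam B th /\ cond_b kap B th.

Definition bad (kap Gam : R) (B : nat) (th : config) : Prop := ~ good kap Gam B th.

Definition badE (Gam : R) (B : nat) (th : config) : Prop :=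
  exists (a : nat) (r : site), (1 <= a <= 3)%nat /\ in_box B r /\ in_box B (shift a r) /\
    Gam <= Rabs (Scomp a (th r) - Scomp a (th (shift a r))).

Definition badSW (kap Gam : R) (B : nat) (th : config) : Prop :=
  bad kap Gam B th /\ ~ badE Gam B th.

(* s uniformly spaced points on the circle, with arbitrary offset th0, i = 1..s *)
Definition theta_star (th0 : R) (s i : nat) : R := th0 + 2 * PI * INR i / INR s.

Definition bad0 (kap Gam Del : R) (B : nat) (ts : R) (th : config) : Prop :=
  bad kap Gam B th /\ forall r, in_box B r -> near_mod (th r) ts Del.

Definition aligned (kap : R) (a : nat) (ts : R) : Prop :=
  near_mod ts (phi a) kap \/ near_mod ts (phi a + PI) kap.

Definition bad_aj (kap Gam Del : R) (B : nat) (ts : R) (a j : nat) (th : config) : Prop :=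
  ~ aligned kap a ts /\
  badSW kap Gam B th /\
  (forall r, in_box B r -> coord a r = (j - 1)%nat -> near_mod (th r) ts Del) /\
  (forall r, in_box B r -> coord a r = j -> near_mod (th r) (2 * phi a - ts) Del).

(* Main.v *)
Require Import Defs.
From Stdlib Require Import Reals ZArith Lia Lra Classical.
Import Defs.
Open Scope R_scope.

Lemma PI_gt3 : 3 < PI. Proof. generalize PI2_3_2; lra. Qed.
Lemma PI_le4 : PI <= 4. Proof. exact PI_4. Qed.

Lemma Rabs_lt_iff x d : Rabs x < d <-> -d < x < d.
Proof. split. intro H; apply Rabs_def2 in H; lra. intros [H1 H2]; apply Rabs_def1; lra. Qed.

Lemma near_congr x y x' y' d : near_mod x y d ->
  (exists m : Z, x' - y' = x - y + 2*PI*IZR m \/ x' - y' = -(x - y) + 2*PI*IZR m) ->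
  near_mod x' y' d.
Proof.
  intros [k Hk] [m [E|E]].
  - exists (k+m)%Z. rewrite plus_IZR.
    replace (x' - y' - 2*PI*(IZR k + IZR m)) with (x - y - 2*PI*IZR k) by lra. auto.
  - exists (m - k)%Z. rewrite minus_IZR.
    replace (x' - y' - 2*PI*(IZR m - IZR k)) with (-(x - y - 2*PI*IZR k)) by lra.
    rewrite Rabs_Ropp; auto.
Qed.

Lemma near_sym x y d : near_mod x y d -> near_mod y x d.
Proof. intro H; apply (near_congr _ _ _ _ _ H). exists 0%Z; right; simpl; lra. Qed.

Lemma near_trans x y z d1 d2 : near_mod x y d1 -> near_mod y z d2 -> near_mod x z (d1+d2).
Proof.
  intros [k1 H1] [k2 H2]. exists (k1+k2)%Z. rewrite plus_IZR.
  replace (x - z - 2*PI*(IZR k1 + IZR k2)) with ((x-y-2*PI*IZR k1) + (y - z - 2*PI*IZR k2)) by lra.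
  eapply Rle_lt_trans. apply Rabs_triang. lra.
Qed.

Lemma near_weak x y d1 d2 : near_mod x y d1 -> d1 <= d2 -> near_mod x y d2.
Proof. intros [k H] Hd; exists k; lra. Qed.

Lemma near_refl x d : 0 < d -> near_mod x x d.
Proof. intro; exists 0%Z. replace (x - x - 2*PI*IZR 0) with 0 by (simpl; lra). rewrite Rabs_R0; auto. Qed.

Lemma near_eq x y d : x = y -> 0 < d -> near_mod x y d.
Proof. intros ->; apply near_refl. Qed.

Lemma near_refl_map c x y d : near_mod x y d -> near_mod (c - x) (c - y) d.
Proof. intro H; apply (near_congr _ _ _ _ _ H). exists 0%Z; right; simpl; lra. Qed.

Lemma near_shift x y d (m : Z) : near_mod x y d -> near_mod x (y + 2*PI*IZR m) d.
Proof. intro H; apply (near_congr _ _ _ _ _ H). exists (-m)%Z; left; rewrite opp_IZR; lra. Qed.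

Lemma sin_kpi (n : Z) : sin (IZR n * PI) = 0.
Proof. apply sin_eq_0_1; eauto. Qed.

Lemma abs_cos_kpi (n : Z) : Rabs (cos (IZR n * PI)) = 1.
Proof.
  pose proof (sin2_cos2 (IZR n * PI)) as H. rewrite sin_kpi in H. unfold Rsqr in H.
  assert (Hc : Rabs (cos (IZR n * PI)) * Rabs (cos (IZR n * PI)) = 1).
  { rewrite <- Rabs_mult. rewrite Rabs_pos_eq; nra. }
  pose proof (Rabs_pos (cos (IZR n * PI))). nra.
Qed.

Lemma abs_sin_shift t (n : Z) : Rabs (sin (t - IZR n * PI)) = Rabs (sin t).
Proof.
  rewrite sin_minus, sin_kpi. replace (sin t * cos (IZR n * PI) - cos t * 0) with (sin t * cos (IZR n * PI)) by ring.
  rewrite Rabs_mult, abs_cos_kpi. ring.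
Qed.

Lemma cos_shift2 x (k : Z) : cos (x + 2*PI*IZR k) = cos x.
Proof.
  rewrite cos_plus.
  replace (2*PI*IZR k) with (IZR (2*k) * PI) by (rewrite mult_IZR; simpl; ring).
  rewrite sin_kpi.
  replace (IZR (2*k) * PI) with (2 * (IZR k * PI)) by (rewrite mult_IZR; simpl; ring).
  rewrite cos_2a_sin, sin_kpi. ring.
Qed.

Lemma ARC t : exists n : Z, Rabs (t - IZR n * PI) <= PI/2.
Proof.
  pose proof PI_gt3 as HP.
  destruct (archimed (t/PI + /2)) as [H1 H2].
  exists (up (t/PI + /2) - 1)%Z. rewrite minus_IZR. simpl.
  set (z := IZR (up (t / PI + / 2))) in *.
  assert (E : t = (t/PI) * PI) by (field; lra).
  set (u := t/PI) in *.
  assert (A1 : (u - /2) * PI < (z - 1) * PI) by (apply Rmult_lt_compat_r; lra).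
  assert (A2 : (z - 1) * PI <= (u + /2) * PI) by (apply Rmult_le_compat_r; lra).
  apply Rabs_le. rewrite E. lra.
Qed.

Lemma sin_approx1 a : sin_approx a 1 = a - a^3/6.
Proof. unfold sin_approx, sin_term. simpl. field. Qed.
Lemma sin_approx2 a : sin_approx a 2 = a - a^3/6 + a^5/120.
Proof. unfold sin_approx, sin_term. simpl. field. Qed.

Lemma sin_lower s : Rabs s <= 4 -> Rabs s - Rabs s ^ 3 / 6 <= Rabs (sin s).
Proof.
  intro Hs. destruct (Rle_dec 0 s) as [H|H].
  - rewrite (Rabs_pos_eq s) in * by lra.
    destruct (pre_sin_bound s 0 H Hs) as [L _]. simpl in L. rewrite sin_approx1 in L.
    eapply Rle_trans; [exact L| apply Rle_abs].
  - rewrite (Rabs_left s) in * by lra.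
    assert (H0 : 0 <= -s) by lra.
    destruct (pre_sin_bound (-s) 0 H0 Hs) as [L _]. simpl in L. rewrite sin_approx1 in L.
    rewrite sin_antisym in L. rewrite <- Rabs_Ropp. eapply Rle_trans; [exact L| apply Rle_abs].
Qed.

Lemma sin_le_abs z : Rabs (sin z) <= Rabs z.
Proof.
  pose proof (SIN_bound z) as Hb.
  destruct (Rle_dec 1 (Rabs z)). { apply Rabs_le; lra. }
  destruct (Rle_dec 0 z) as [H|H].
  - rewrite (Rabs_pos_eq z) in * by lra.
    assert (Hz : z <= 4) by lra.
    destruct (pre_sin_bound z 0 H Hz) as [L U]. simpl in L, U. rewrite sin_approx1 in L. rewrite sin_approx2 in U.
    assert (z^2 <= 1) by nra. assert (0 <= z^3) by (simpl; nra).
    assert (z^5 = z^3 * z^2) by ring. assert (z^3 = z * z^2) by ring.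
    apply Rabs_le. split; nra.
  - rewrite (Rabs_left z) in * by lra.
    assert (H0 : 0 <= -z) by lra. assert (Hz : -z <= 4) by lra.
    destruct (pre_sin_bound (-z) 0 H0 Hz) as [L U]. simpl in L, U. rewrite sin_approx1 in L. rewrite sin_approx2 in U.
    rewrite sin_antisym in L, U.
    assert ((-z)^2 <= 1) by nra. assert (0 <= (-z)^3) by (simpl; nra).
    assert ((-z)^5 = (-z)^3 * (-z)^2) by ring. assert ((-z)^3 = (-z) * (-z)^2) by ring.
    apply Rabs_le. split; nra.
Qed.

Lemma sin_lip x y : Rabs (sin x) - Rabs y <= Rabs (sin (x + y)).
Proof.
  pose proof (form4 (x+y) x) as F.
  replace ((x + y - x)/2) with (y/2) in F by field.
  assert (Hd : Rabs (sin (x+y) - sin x) <= Rabs y).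
  { rewrite F. rewrite !Rabs_mult. pose proof (sin_le_abs (y/2)).
    pose proof (COS_bound ((x + y + x) / 2)).
    assert (Rabs (cos ((x + y + x) / 2)) <= 1) by (apply Rabs_le; lra).
    replace (Rabs (y/2)) with (Rabs y / 2) in * by (unfold Rdiv; rewrite Rabs_mult, (Rabs_pos_eq (/2)) by lra; ring).
    rewrite (Rabs_pos_eq 2) by lra.
    pose proof (Rabs_pos (sin (y/2))). pose proof (Rabs_pos (cos ((x + y + x) / 2))). nra. }
  pose proof (Rabs_triang_inv (sin x) (sin (x+y))).
  rewrite <- Rabs_Ropp in Hd. replace (-(sin (x+y) - sin x)) with (sin x - sin (x+y)) in Hd by ring. lra.
Qed.

Lemma sin_third s : Rabs s <= 2 -> Rabs s / 3 <= Rabs (sin s).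
Proof.
  intro H. assert (H4 : Rabs s <= 4) by lra. pose proof (sin_lower s H4).
  pose proof (Rabs_pos s).
  assert (Rabs s ^ 3 <= 4 * Rabs s) by (simpl; nra). lra.
Qed.

Lemma COARSE u v g : 0 <= g -> Rabs (cos u - cos v) < g*g ->
  near_mod v u (5*g) \/ near_mod v (-u) (5*g).
Proof.
  intros Hg H. rewrite form2 in H.
  pose proof PI_gt3. pose proof PI_le4.
  destruct (ARC ((u-v)/2)) as [n2 H2']. destruct (ARC ((u+v)/2)) as [n1 H1'].
  set (Q := (u - v)/2 - IZR n2 * PI) in *. set (P := (u + v)/2 - IZR n1 * PI) in *.
  assert (SQ : Rabs Q / 3 <= Rabs (sin ((u-v)/2))).
  { rewrite <- (abs_sin_shift _ n2). apply sin_third. unfold Q in *; lra. }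
  assert (SP : Rabs P / 3 <= Rabs (sin ((u+v)/2))).
  { rewrite <- (abs_sin_shift _ n1). apply sin_third. unfold P in *; lra. }
  rewrite !Rabs_mult in H. replace (Rabs (-2)) with 2 in H by (rewrite Rabs_left by lra; lra).
  pose proof (Rabs_pos Q). pose proof (Rabs_pos P).
  pose proof (Rabs_pos (sin ((u-v)/2))). pose proof (Rabs_pos (sin ((u+v)/2))).
  assert (HPQ : Rabs Q * Rabs P < 4.5 * (g*g)).
  { assert (Rabs Q / 3 * (Rabs P / 3) <= Rabs (sin ((u-v)/2)) * Rabs (sin ((u+v)/2))).
    { apply Rmult_le_compat; lra. } nra. }
  destruct (Rlt_dec (Rabs Q) (2.2*g)) as [HQ|HQ].
  - left. exists (- n2)%Z. rewrite opp_IZR.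
    replace (v - u - 2*PI*(- IZR n2)) with (-(2*Q)) by (unfold Q; field).
    rewrite Rabs_Ropp, Rabs_mult, (Rabs_pos_eq 2) by lra. lra.
  - right. assert (HP : Rabs P < 2.2*g).
    { destruct (Rlt_dec (Rabs P) (2.2*g)); auto. exfalso. nra. }
    exists n1.
    replace (v - - u - 2*PI*IZR n1) with (2*P) by (unfold P; field).
    rewrite Rabs_mult, (Rabs_pos_eq 2) by lra. lra.
Qed.

Lemma FINE_core u t g S : 0 < g -> 250*g <= S -> S <= Rabs (sin u) -> Rabs t < 5*g ->
  Rabs (cos u - cos (u + t)) < g*g -> Rabs t < 11/10*(g*g)/S.
Proof.
  intros Hg HS HSu Ht H.
  assert (E : Rabs (cos u - cos (u + t)) = 2 * (Rabs (sin (u + t/2)) * Rabs (sin (t/2)))).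
  { rewrite form2.
    replace ((u - (u + t))/2) with (-(t/2)) by field.
    replace ((u + (u + t))/2) with (u + t/2) by field.
    rewrite sin_antisym. rewrite !Rabs_mult, Rabs_Ropp.
    replace (Rabs (-2)) with 2 by (rewrite Rabs_left by lra; lra). ring. }
  rewrite E in H.
  pose proof (SIN_bound u). assert (S <= 1) by (apply Rle_trans with (1:=HSu); apply Rabs_le; lra).
  assert (Ht2 : Rabs (t/2) = Rabs t / 2).
  { unfold Rdiv; rewrite Rabs_mult, (Rabs_pos_eq (/2)) by lra; ring. }
  assert (A1 : 0.99 * S <= Rabs (sin (u + t/2))).
  { pose proof (sin_lip u (t/2)) as L. rewrite Ht2 in L. lra. }
  assert (A2 : 0.9999 * (Rabs t / 2) <= Rabs (sin (t/2))).
  { assert (L4 : Rabs (t/2) <= 4) by lra. pose proof (sin_lower (t/2) L4) as L. rewrite Ht2 in L.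
    pose proof (Rabs_pos t).
    assert (Ha : 0 <= Rabs t / 2 < 2.5*g) by lra.
    assert (Ha2 : (Rabs t / 2)*(Rabs t / 2) <= (2.5*g)^2) by (simpl; nra).
    assert ((Rabs t / 2)^3 <= (Rabs t / 2) * (2.5*g)^2).
    { replace ((Rabs t / 2)^3) with ((Rabs t / 2) * ((Rabs t / 2)*(Rabs t / 2))) by ring.
      apply Rmult_le_compat_l; lra. }
    assert ((2.5*g)^2 <= 0.0006) by (simpl; nra).
    nra. }
  pose proof (Rabs_pos t).
  assert (B1 : 0.99 * S * (0.9999 * (Rabs t / 2)) <= Rabs (sin (u + t/2)) * Rabs (sin (t/2))).
  { apply Rmult_le_compat; nra. }
  assert (B2 : Rabs t * S * 0.98 < g*g) by nra.
  apply Rmult_lt_reg_r with S; [lra|].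
  replace (11/10*(g*g)/S*S) with (11/10*(g*g)) by (field; lra).
  nra.
Qed.

Lemma FINE u v g S : 0 < g -> 250*g <= S -> S <= Rabs (sin u) -> Rabs (cos u - cos v) < g*g ->
  (near_mod v u (5*g) -> near_mod v u (11/10*(g*g)/S)) /\
  (near_mod v (-u) (5*g) -> near_mod v (-u) (11/10*(g*g)/S)).
Proof.
  intros Hg HS HSu H. split.
  - intros [k Hk]. exists k. set (t := v - u - 2*PI*IZR k) in *.
    assert (Ev : v = u + t + 2*PI*IZR k) by (unfold t; ring).
    rewrite Ev, cos_shift2 in H.
    exact (FINE_core u t g S Hg HS HSu Hk H).
  - intros [k Hk]. exists k. set (t := v - - u - 2*PI*IZR k) in *.
    assert (Ev : v = -(u + - t) + 2*PI*IZR k) by (unfold t; ring).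
    rewrite Ev, cos_shift2, <- cos_sym in H.
    rewrite <- Rabs_Ropp in Hk |- *.
    exact (FINE_core u (-t) g S Hg HS HSu Hk H).
Qed.

Definition K (a : nat) : Z := match a with 1%nat => 0%Z | 2%nat => 2%Z | _ => (-2)%Z end.
Lemma phi_K a : phi a = IZR (K a) * (PI/3).
Proof. destruct a as [|[|[|a]]]; simpl; lra. Qed.

Definition aff (p : Z*Z) (x : R) := IZR (fst p) * x + IZR (snd p) * (2*PI/3).
Definition sg (a : nat) (p : Z*Z) : Z*Z := ((- fst p)%Z, (K a - snd p)%Z).
Definition pw (a : nat) (b : bool) (p : Z*Z) := if b then sg a p else p.
Definition I0 : Z*Z := (1%Z, 0%Z).
Definition okp (p : Z*Z) := fst p = 1%Z \/ fst p = (-1)%Z.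

Lemma aff_sg a p x : 2 * phi a - aff p x = aff (sg a p) x.
Proof. unfold aff, sg; simpl. rewrite phi_K, opp_IZR, minus_IZR. field. Qed.
Lemma aff_I0 x : aff I0 x = x.
Proof. unfold aff, I0; simpl. field. Qed.
Lemma ok_pw a b p : okp p -> okp (pw a b p).
Proof. unfold okp, pw, sg; destruct b; simpl; lia. Qed.
Lemma ok_I0 : okp I0. Proof. left; reflexivity. Qed.

Definition Far (x mu : R) := forall n : Z, mu <= Rabs (x - IZR n * (PI/3)).

Lemma intsep (L : Z) c : 0 < c -> Rabs (IZR L * c) < c -> L = 0%Z.
Proof.
  intros Hc H. destruct (Z.eq_dec L 0) as [|N]; auto. exfalso.
  rewrite Rabs_mult, (Rabs_pos_eq c) in H by lra.
  assert (1 <= Rabs (IZR L)).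
  { destruct (Z_lt_le_dec L 0).
    - rewrite Rabs_left. assert (IZR L <= -1) by (apply IZR_le; lia). lra.
      apply IZR_lt; lia.
    - rewrite Rabs_pos_eq. apply IZR_le; lia. apply IZR_le; lia. }
  nra.
Qed.

Definition RA (p1 p2 : Z*Z) : Prop := fst p1 = fst p2 /\ ((snd p1 - snd p2) mod 3 = 0)%Z.
Definition RB (m : Z) (p1 p2 : Z*Z) : Prop :=
  ((fst p1 * m + 2 * snd p1 - fst p2 * m - 2 * snd p2) mod 6 = 0)%Z.

Ltac pushZ := repeat first [rewrite plus_IZR | rewrite minus_IZR | rewrite mult_IZR | rewrite opp_IZR].

Lemma SEPA x mu p1 p2 D : Far x mu -> okp p1 -> okp p2 ->
  near_mod (aff p1 x) (aff p2 x) D -> D < 2*mu -> D <= 1 -> RA p1 p2.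
Proof.
  intros HF H1 H2 [k Hk] HD1 HD2. pose proof PI_gt3.
  destruct p1 as [e1 n1], p2 as [e2 n2]. unfold okp, aff, RA in *; simpl in *.
  destruct H1 as [->| ->]; destruct H2 as [->| ->]; simpl in Hk.
  - assert (E : (n1 - n2 - 3*k)%Z = 0%Z).
    { apply (intsep _ (2*PI/3)). lra. pushZ. simpl.
      replace ((IZR n1 - IZR n2 - 3 * IZR k) * (2 * PI / 3)) with
        (1 * x + IZR n1 * (2 * PI / 3) - (1 * x + IZR n2 * (2 * PI / 3)) - 2 * PI * IZR k) by field. lra. }
    split; auto. Z.div_mod_to_equations; lia.
  - exfalso. specialize (HF (n2 - n1 + 3*k)%Z). revert HF. pushZ. simpl.
    replace (1 * x + IZR n1 * (2 * PI / 3) - (-1 * x + IZR n2 * (2 * PI / 3)) - 2 * PI * IZR k)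
      with (2 * (x - (IZR n2 - IZR n1 + 3 * IZR k) * (PI / 3))) in Hk by field.
    rewrite Rabs_mult, Rabs_pos_eq in Hk by lra. lra.
  - exfalso. specialize (HF (n1 - n2 - 3*k)%Z). revert HF. pushZ. simpl.
    replace (-1 * x + IZR n1 * (2 * PI / 3) - (1 * x + IZR n2 * (2 * PI / 3)) - 2 * PI * IZR k)
      with (-(2 * (x - (IZR n1 - IZR n2 - 3 * IZR k) * (PI / 3)))) in Hk by field.
    rewrite Rabs_Ropp, Rabs_mult, Rabs_pos_eq in Hk by lra. lra.
  - assert (E : (n1 - n2 - 3*k)%Z = 0%Z).
    { apply (intsep _ (2*PI/3)). lra. pushZ. simpl.
      replace ((IZR n1 - IZR n2 - 3 * IZR k) * (2 * PI / 3)) with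
        (-1 * x + IZR n1 * (2 * PI / 3) - (-1 * x + IZR n2 * (2 * PI / 3)) - 2 * PI * IZR k) by field. lra. }
    split; auto. Z.div_mod_to_equations; lia.
Qed.

Lemma NRA x p1 p2 d : RA p1 p2 -> 0 < d -> near_mod (aff p1 x) (aff p2 x) d.
Proof.
  intros [E M] Hd. destruct p1 as [e1 n1], p2 as [e2 n2]. unfold aff in *; simpl in *. subst e2.
  assert (Q : exists q, (n1 - n2 = 3*q)%Z) by (exists ((n1 - n2)/3)%Z; Z.div_mod_to_equations; lia).
  destruct Q as [q Q]. exists q.
  replace (IZR e1 * x + IZR n1 * (2 * PI / 3) - (IZR e1 * x + IZR n2 * (2 * PI / 3)) - 2 * PI * IZR q)
    with ((IZR (n1 - n2) - 3 * IZR q) * (2*PI/3)) by (pushZ; field).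
  rewrite Q. pushZ. simpl. replace ((3 * IZR q - 3 * IZR q) * (2 * PI / 3)) with 0 by field.
  rewrite Rabs_R0; auto.
Qed.

Lemma near_special_split x m eta : near_mod x (IZR m * (PI/3)) eta ->
  exists d k, x = IZR m * (PI/3) + d + 2*PI*IZR k /\ Rabs d < eta.
Proof. intros [k Hk]. exists (x - IZR m * (PI / 3) - 2 * PI * IZR k), k. split; auto; ring. Qed.

Lemma SEPB x m eta p1 p2 D : near_mod x (IZR m * (PI/3)) eta -> okp p1 -> okp p2 ->
  near_mod (aff p1 x) (aff p2 x) D -> D + 2*eta <= 1 -> RB m p1 p2.
Proof.
  intros Hx H1 H2 [k Hk] HD. pose proof PI_gt3.
  destruct (near_special_split _ _ _ Hx) as [d [k0 [Ex Hd]]].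
  destruct p1 as [e1 n1], p2 as [e2 n2]. unfold okp, aff, RB in *; cbn [fst snd] in *.
  apply Rabs_lt_iff in Hd.
  destruct H1 as [->| ->]; destruct H2 as [->| ->]; rewrite Ex in Hk;
    apply Rabs_lt_iff in Hk.
  - assert (E : (2*n1 - 2*n2 - 6*k)%Z = 0%Z).
    { apply (intsep _ (PI/3)). lra. pushZ. apply Rabs_lt_iff. split; lra. }
    Z.div_mod_to_equations; lia.
  - assert (E : (2*m + 2*n1 - 2*n2 + 12*k0 - 6*k)%Z = 0%Z).
    { apply (intsep _ (PI/3)). lra. pushZ. apply Rabs_lt_iff. split; lra. }
    Z.div_mod_to_equations; lia.
  - assert (E : (-2*m + 2*n1 - 2*n2 - 12*k0 - 6*k)%Z = 0%Z).
    { apply (intsep _ (PI/3)). lra. pushZ. apply Rabs_lt_iff. split; lra. }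
    Z.div_mod_to_equations; lia.
  - assert (E : (2*n1 - 2*n2 - 6*k)%Z = 0%Z).
    { apply (intsep _ (PI/3)). lra. pushZ. apply Rabs_lt_iff. split; lra. }
    Z.div_mod_to_equations; lia.
Qed.

Lemma NRB x m eta p1 p2 : near_mod x (IZR m * (PI/3)) eta -> okp p1 -> okp p2 -> 0 < eta ->
  RB m p1 p2 -> near_mod (aff p1 x) (aff p2 x) (2*eta).
Proof.
  intros Hx H1 H2 He HR.
  destruct (near_special_split _ _ _ Hx) as [d [k0 [Ex Hd]]].
  destruct p1 as [e1 n1], p2 as [e2 n2]. unfold okp, aff, RB in *; cbn [fst snd] in *.
  apply Rabs_lt_iff in Hd.
  assert (Q : exists q, ((e1 * m + 2 * n1 - e2 * m - 2 * n2) = 6*q)%Z)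
    by (exists ((e1 * m + 2 * n1 - e2 * m - 2 * n2)/6)%Z; Z.div_mod_to_equations; lia).
  destruct Q as [q Q]. clear HR.
  destruct H1 as [->| ->]; destruct H2 as [->| ->]; rewrite Ex.
  - exists q. apply Rabs_lt_iff. assert (E: IZR (2*n1 - 2*n2) = IZR (6*q)) by (f_equal; lia).
    revert E; pushZ; intro E.
    assert (E2 := f_equal (fun z => z * (PI/3)) E); cbv beta in E2. split; lra.
  - exists (q + 2*k0)%Z. apply Rabs_lt_iff. assert (E: IZR (2*m + 2*n1 - 2*n2) = IZR (6*q)) by (f_equal; lia).
    revert E; pushZ; intro E.
    assert (E2 := f_equal (fun z => z * (PI/3)) E); cbv beta in E2. split; lra.
  - exists (q - 2*k0)%Z. apply Rabs_lt_iff. assert (E: IZR (-2*m + 2*n1 - 2*n2) = IZR (6*q)) by (f_equal; lia).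
    revert E; pushZ; intro E.
    assert (E2 := f_equal (fun z => z * (PI/3)) E); cbv beta in E2. split; lra.
  - exists q. apply Rabs_lt_iff. assert (E: IZR (2*n1 - 2*n2) = IZR (6*q)) by (f_equal; lia).
    revert E; pushZ; intro E.
    assert (E2 := f_equal (fun z => z * (PI/3)) E); cbv beta in E2. split; lra.
Qed.

Definition COMB (R : Z*Z -> Z*Z -> Prop) (a b : nat) := forall A B A' B' : bool,
  R (pw b B' (pw a A I0)) (pw a A' (pw b B I0)) ->
  ((~ R (pw a A I0) I0 <-> ~ R (pw a A' (pw b B I0)) (pw b B I0)) /\
   (~ R (pw b B I0) I0 <-> ~ R (pw b B' (pw a A I0)) (pw a A I0)) /\
   ~ (~ R (pw a A I0) I0 /\ ~ R (pw b B I0) I0)).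

Lemma COMB_A a b : (1 <= a <= 3)%nat -> (1 <= b <= 3)%nat -> a <> b -> COMB RA a b.
Proof.
  intros Ha Hb Hab A B A' B'.
  assert (Ca : a = 1%nat \/ a = 2%nat \/ a = 3%nat) by lia.
  assert (Cb : b = 1%nat \/ b = 2%nat \/ b = 3%nat) by lia.
  destruct Ca as [->|[->| ->]]; destruct Cb as [->|[->| ->]]; try lia;
  destruct A, B, A', B'; unfold RA, pw, sg, I0, K; cbn [fst snd]; intro H;
  Z.div_mod_to_equations; repeat split; intros; lia.
Qed.

Lemma COMB_B m a b : (1 <= a <= 3)%nat -> (1 <= b <= 3)%nat -> a <> b -> COMB (RB m) a b.
Proof.
  intros Ha Hb Hab A B A' B'.
  assert (Ca : a = 1%nat \/ a = 2%nat \/ a = 3%nat) by lia.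
  assert (Cb : b = 1%nat \/ b = 2%nat \/ b = 3%nat) by lia.
  destruct Ca as [->|[->| ->]]; destruct Cb as [->|[->| ->]]; try lia;
  destruct A, B, A', B'; unfold RB, pw, sg, I0, K; cbn [fst snd]; intro H;
  Z.div_mod_to_equations; repeat split; intros; lia.
Qed.

Lemma SENS y mu : (forall m : Z, mu <= Rabs (y - IZR m * PI)) -> 0 < mu -> mu <= 0.7 ->
  0.9 * mu <= Rabs (sin y).
Proof.
  intros H Hm Hm2. pose proof PI_le4. pose proof PI_gt3.
  destruct (ARC y) as [n Hn]. rewrite <- (abs_sin_shift y n).
  specialize (H n). set (s := y - IZR n * PI) in *.
  assert (Hs4 : Rabs s <= 4) by lra.
  pose proof (sin_lower s Hs4).
  set (a := Rabs s) in *.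
  assert (a - a^3/6 - (mu - mu^3/6) = (a - mu) * (1 - (a*a + a*mu + mu*mu)/6)) by (simpl; field).
  assert (0 <= (a - mu) * (1 - (a*a + a*mu + mu*mu)/6)).
  { apply Rmult_le_pos. lra. assert (a*a <= 4) by nra. assert (a*mu <= 1.4) by nra. nra. }
  assert (mu^3 <= 0.6 * mu) by (simpl; nra).
  lra.
Qed.

Lemma Far_sens x mu a : Far x mu -> 0 < mu -> mu <= 0.7 -> 0.9 * mu <= Rabs (sin (x - phi a)).
Proof.
  intros HF H1 H2. apply SENS; auto. intro m. rewrite phi_K.
  specialize (HF (K a + 3*m)%Z). revert HF. pushZ.
  replace (x - (IZR (K a) + 3 * IZR m) * (PI / 3)) with (x - IZR (K a) * (PI / 3) - IZR m * PI) by field.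
  auto.
Qed.

Lemma abs_ge1 (L : Z) : L <> 0%Z -> 1 <= Rabs (IZR L).
Proof.
  intro N. destruct (Z_lt_le_dec L 0).
  - rewrite Rabs_left. assert (IZR L <= -1) by (apply IZR_le; lia). lra. apply IZR_lt; lia.
  - rewrite Rabs_pos_eq. apply IZR_le; lia. apply IZR_le; lia.
Qed.

Lemma Spec_sens x t eta a : near_mod x (IZR t * (PI/3)) eta -> 0 < eta -> eta <= 0.3 ->
  ((t - K a) mod 3 <> 0)%Z -> 0.63 <= Rabs (sin (x - phi a)).
Proof.
  intros Hx He1 He2 Ht. pose proof PI_gt3.
  replace 0.63 with (0.9 * 0.7) by lra. apply SENS; try lra. intro m.
  destruct (near_special_split _ _ _ Hx) as [d [k0 [Ex Hd]]].
  set (L := (t - K a - 3*m + 6*k0)%Z).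
  assert (NL : L <> 0%Z) by (unfold L; intro; apply Ht; Z.div_mod_to_equations; lia).
  assert (E : x - phi a - IZR m * PI = IZR L * (PI/3) + d).
  { rewrite Ex, phi_K. unfold L. pushZ. field. }
  rewrite E. pose proof (abs_ge1 L NL).
  assert (PI/3 <= Rabs (IZR L * (PI/3))).
  { rewrite Rabs_mult, (Rabs_pos_eq (PI/3)) by lra. nra. }
  pose proof (Rabs_triang_inv (IZR L * (PI/3)) (-d)). 
  replace (IZR L * (PI / 3) - - d) with (IZR L * (PI / 3) + d) in H2 by ring.
  rewrite Rabs_Ropp in H2. lra.
Qed.

Lemma abs_lower_helper A B e mu : mu <= Rabs A -> Rabs (B - A) < e -> mu - e <= Rabs B.
Proof.
  intros H1 H2. pose proof (Rabs_triang_inv A (A - B)).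
  replace (A - (A - B)) with B in H by ring. rewrite <- Rabs_Ropp in H2.
  replace (- (B - A)) with (A - B) in H2 by ring. lra.
Qed.

Lemma Far_prop x y mu e a : Far x mu -> (near_mod y x e \/ near_mod y (2*phi a - x) e) -> Far y (mu - e).
Proof.
  intros HF [[k Hk]|[k Hk]] n.
  - specialize (HF (n - 6*k)%Z). apply (abs_lower_helper _ _ _ _ HF).
    revert Hk. pushZ. intro Hk.
    replace (y - IZR n * (PI / 3) - (x - (IZR n - 6 * IZR k) * (PI / 3))) with (y - x - 2*PI*IZR k) by field. auto.
  - specialize (HF (2*K a - n + 6*k)%Z). rewrite <- Rabs_Ropp in HF.
    apply (abs_lower_helper _ _ _ _ HF). revert Hk. rewrite phi_K. pushZ. intro Hk.
    replace (y - IZR n * (PI / 3) - - (x - (2 * IZR (K a) - IZR n + 6 * IZR k) * (PI / 3)))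
      with (y - (2 * (IZR (K a) * (PI / 3)) - x) - 2 * PI * IZR k) by field. auto.
Qed.

Lemma refl_special a n : 2 * phi a - IZR n * (PI/3) = IZR (2 * K a - n) * (PI/3).
Proof. rewrite phi_K. pushZ. field. Qed.

Lemma Spec_prop x y n h e a : near_mod x (IZR n * (PI/3)) h ->
  (near_mod y x e \/ near_mod y (2*phi a - x) e) -> exists n', near_mod y (IZR n' * (PI/3)) (e + h).
Proof.
  intros Hx [H|H].
  - exists n. eapply near_trans; eauto.
  - exists (2 * K a - n)%Z. rewrite <- refl_special. eapply near_trans. exact H.
    apply near_refl_map. auto.
Qed.

Lemma SPSEP x n1 n2 h1 h2 : near_mod x (IZR n1 * (PI/3)) h1 -> near_mod x (IZR n2 * (PI/3)) h2 ->
  h1 + h2 <= 1 -> ((n1 - n2) mod 6 = 0)%Z.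
Proof.
  intros H1 H2 Hh. pose proof PI_gt3.
  destruct (near_trans _ _ _ _ _ (near_sym _ _ _ H1) H2) as [k Hk].
  assert (E : (n1 - n2 - 6*k)%Z = 0%Z).
  { apply (intsep _ (PI/3)). lra. pushZ.
    replace ((IZR n1 - IZR n2 - 6 * IZR k) * (PI / 3)) with (IZR n1 * (PI / 3) - IZR n2 * (PI / 3) - 2 * PI * IZR k) by field.
    lra. }
  Z.div_mod_to_equations; lia.
Qed.

Lemma SPEQ x n1 n2 h : ((n1 - n2) mod 6 = 0)%Z -> near_mod x (IZR n1 * (PI/3)) h -> near_mod x (IZR n2 * (PI/3)) h.
Proof.
  intros Hm H. assert (Q : exists q, (n2 = n1 + 6*q)%Z) by (exists (-((n1 - n2)/6))%Z; Z.div_mod_to_equations; lia).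
  destruct Q as [q ->]. replace (IZR (n1 + 6*q) * (PI/3)) with (IZR n1 * (PI/3) + 2*PI*IZR q) by (pushZ; field).
  apply near_shift; auto.
Qed.

Lemma step0 a x y e : (near_mod y x e \/ near_mod y (2*phi a - x) e) ->
  exists bt, near_mod y (aff (pw a bt I0) x) e.
Proof.
  intros [H|H].
  - exists false. simpl. rewrite aff_I0. auto.
  - exists true. simpl. rewrite <- aff_sg, aff_I0. auto.
Qed.

Lemma step1 a x y z P e e' : (near_mod y z e \/ near_mod y (2*phi a - z) e) ->
  near_mod z (aff P x) e' -> exists bt, near_mod y (aff (pw a bt P) x) (e + e').
Proof.
  intros [H|H] Hz.
  - exists false. simpl. eapply near_trans; eauto.
  - exists true. simpl. rewrite <- aff_sg. eapply near_trans. exact H.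
    apply near_refl_map; auto.
Qed.

Lemma TR (Rl : Z*Z -> Z*Z -> Prop) x y z P Q e1 e2 nu rho D :
  (forall p1 p2, okp p1 -> okp p2 -> near_mod (aff p1 x) (aff p2 x) D -> Rl p1 p2) ->
  (forall p1 p2, okp p1 -> okp p2 -> Rl p1 p2 -> near_mod (aff p1 x) (aff p2 x) nu) ->
  okp P -> okp Q -> near_mod y (aff P x) e1 -> near_mod z (aff Q x) e2 ->
  e1 + e2 + nu <= rho -> rho + e1 + e2 <= D ->
  (~ near_mod y z rho <-> ~ Rl P Q).
Proof.
  intros SEP NR HP HQ Hy Hz H1 H2. split.
  - intros N HR. apply N. apply near_weak with (e1 + nu + e2); [|lra].
    assert (T1 := NR P Q HP HQ HR).
    exact (near_trans _ _ _ _ _ (near_trans _ _ _ _ _ Hy T1) (near_sym _ _ _ Hz)).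
  - intros N Hn. apply N. apply SEP; auto. apply near_weak with (e1 + rho + e2); [|lra].
    exact (near_trans _ _ _ _ _ (near_trans _ _ _ _ _ (near_sym _ _ _ Hy) Hn) Hz).
Qed.

Lemma PLAQ (Rl : Z*Z -> Z*Z -> Prop) (x p q w ec nu rho D : R) (a b : nat) :
  COMB Rl a b ->
  (forall p1 p2, okp p1 -> okp p2 -> near_mod (aff p1 x) (aff p2 x) D -> Rl p1 p2) ->
  (forall p1 p2, okp p1 -> okp p2 -> Rl p1 p2 -> near_mod (aff p1 x) (aff p2 x) nu) ->
  0 < ec -> 0 <= nu -> 3*ec + nu <= rho -> rho + 4*ec <= D ->
  (near_mod p x ec \/ near_mod p (2*phi a - x) ec) ->
  (near_mod q x ec \/ near_mod q (2*phi b - x) ec) ->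
  (near_mod w p ec \/ near_mod w (2*phi b - p) ec) ->
  (near_mod w q ec \/ near_mod w (2*phi a - q) ec) ->
  (~ near_mod p x rho <-> ~ near_mod w q rho) /\ (~ near_mod q x rho <-> ~ near_mod w p rho) /\
  ~ (~ near_mod p x rho /\ ~ near_mod q x rho).
Proof.
  intros HC SEP NR Hec Hnu H1 H2 Ep Eq Ew1 Ew2.
  destruct (step0 _ _ _ _ Ep) as [A HA].
  destruct (step0 _ _ _ _ Eq) as [B HB].
  destruct (step1 _ _ _ _ _ _ _ Ew1 HA) as [B' HB'].
  destruct (step1 _ _ _ _ _ _ _ Ew2 HB) as [A' HA'].
  assert (okA : okp (pw a A I0)) by (apply ok_pw, ok_I0).
  assert (okB : okp (pw b B I0)) by (apply ok_pw, ok_I0).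
  assert (okW1 : okp (pw b B' (pw a A I0))) by (apply ok_pw; auto).
  assert (okW2 : okp (pw a A' (pw b B I0))) by (apply ok_pw; auto).
  assert (HR : Rl (pw b B' (pw a A I0)) (pw a A' (pw b B I0))).
  { apply SEP; auto. apply near_weak with ((ec+ec) + (ec+ec)); [|lra].
    exact (near_trans _ _ _ _ _ (near_sym _ _ _ HB') HA'). }
  destruct (HC A B A' B' HR) as [C1 [C2 C3]].
  assert (Hx : near_mod x (aff I0 x) ec) by (rewrite aff_I0; apply near_refl; auto).
  rewrite (TR Rl x p x _ _ ec ec nu rho D SEP NR okA ok_I0 HA Hx) by lra.
  rewrite (TR Rl x w q _ _ (ec+ec) ec nu rho D SEP NR okW2 okB HA' HB) by lra.
  rewrite (TR Rl x q x _ _ ec ec nu rho D SEP NR okB ok_I0 HB Hx) by lra.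
  rewrite (TR Rl x w p _ _ (ec+ec) ec nu rho D SEP NR okW1 okA HB' HA) by lra.
  auto.
Qed.

Definition upd (a v : nat) (r : site) : site :=
  match r with (x, y, z) =>
    match a with 1%nat => (v, y, z) | 2%nat => (x, v, z) | _ => (x, y, v) end end.
Definition base (a j : nat) : site :=
  match a with 1%nat => (j, 0, 0)%nat | 2%nat => (0, j, 0)%nat | _ => (0, 0, j)%nat end.

Ltac dir a := let H := fresh in assert (H : a = 1%nat \/ a = 2%nat \/ a = 3%nat) by lia;
  destruct H as [->|[->| ->]].
Ltac dsite r := let x := fresh "x" in let y := fresh "y" in let z := fresh "z" in destruct r as [[x y] z].

Lemma shift_comm a b r : (1 <= a <= 3)%nat -> (1 <= b <= 3)%nat ->
  shift a (shift b r) = shift b (shift a r).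
Proof. intros Ha Hb. dir a; dir b; dsite r; reflexivity. Qed.

Lemma coord_shift_same a r : (1 <= a <= 3)%nat -> coord a (shift a r) = S (coord a r).
Proof. intros Ha. dir a; dsite r; reflexivity. Qed.
Lemma coord_shift_other a b r : (1 <= a <= 3)%nat -> (1 <= b <= 3)%nat -> a <> b ->
  coord a (shift b r) = coord a r.
Proof. intros Ha Hb N. dir a; dir b; try lia; dsite r; reflexivity. Qed.

Lemma in_box_shift B a r : (1 <= a <= 3)%nat -> in_box B r -> (coord a r < B)%nat -> in_box B (shift a r).
Proof. intros Ha. dir a; dsite r; unfold in_box; simpl; lia. Qed.
Lemma in_box_shift_lt B a r : (1 <= a <= 3)%nat -> in_box B (shift a r) -> (coord a r < B)%nat.
Proof. intros Ha. dir a; dsite r; unfold in_box; simpl; lia. Qed.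
Lemma in_box_shift_inv B a r : (1 <= a <= 3)%nat -> in_box B (shift a r) -> in_box B r.
Proof. intros Ha. dir a; dsite r; unfold in_box; simpl; lia. Qed.

Lemma coord_upd_same a v r : (1 <= a <= 3)%nat -> coord a (upd a v r) = v.
Proof. intros Ha. dir a; dsite r; reflexivity. Qed.
Lemma coord_upd_other a b v r : (1 <= a <= 3)%nat -> (1 <= b <= 3)%nat -> a <> b ->
  coord a (upd b v r) = coord a r.
Proof. intros Ha Hb N. dir a; dir b; try lia; dsite r; reflexivity. Qed.
Lemma in_box_upd B b v r : (1 <= b <= 3)%nat -> in_box B r -> (v <= B)%nat -> in_box B (upd b v r).
Proof. intros Hb. dir b; dsite r; unfold in_box; simpl; lia. Qed.
Lemma shift_upd b v r : (1 <= b <= 3)%nat -> shift b (upd b v r) = upd b (S v) r.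
Proof. intros Hb. dir b; dsite r; reflexivity. Qed.
Lemma upd_coord b r : (1 <= b <= 3)%nat -> upd b (coord b r) r = r.
Proof. intros Hb. dir b; dsite r; reflexivity. Qed.
Lemma shift_upd_self a r : (1 <= a <= 3)%nat -> (1 <= coord a r)%nat ->
  shift a (upd a (coord a r - 1) r) = r.
Proof. intros Ha. dir a; dsite r; simpl; intro; f_equal; try f_equal; lia. Qed.

Lemma coord_base a j : (1 <= a <= 3)%nat -> coord a (base a j) = j.
Proof. intros Ha. dir a; reflexivity. Qed.
Lemma in_box_base B a j : (1 <= a <= 3)%nat -> (j <= B)%nat -> in_box B (base a j).
Proof. intros Ha. dir a; unfold in_box; simpl; lia. Qed.
Lemma shift_base a j : (1 <= a <= 3)%nat -> shift a (base a j) = base a (S j).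
Proof. intros Ha. dir a; reflexivity. Qed.

Lemma chain_iff (P : nat -> Prop) N : (forall n, (n < N)%nat -> (P n <-> P (S n))) ->
  forall n, (n <= N)%nat -> (P n <-> P 0%nat).
Proof.
  intros H n. induction n; intro Hn. tauto.
  rewrite <- IHn by lia. symmetry. apply H. lia.
Qed.

Section Flips.
Variable B : nat.
Variable Fl : nat -> site -> Prop.
Hypothesis PL : forall a b r, (1 <= a <= 3)%nat -> (1 <= b <= 3)%nat -> a <> b -> in_box B r ->
  (coord a r < B)%nat -> (coord b r < B)%nat ->
  (Fl a r <-> Fl a (shift b r)) /\ ~ (Fl a r /\ Fl b r).

Lemma flip_upd a b r v : (1 <= a <= 3)%nat -> (1 <= b <= 3)%nat -> a <> b -> in_box B r ->
  (coord a r < B)%nat -> (v <= B)%nat -> (Fl a r <-> Fl a (upd b v r)).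
Proof.
  intros Ha Hb N Hr Hc Hv.
  assert (Hc' : (coord b r <= B)%nat) by (clear -Hr Hb; dir b; dsite r; unfold in_box in *; simpl in *; lia).
  assert (CH : forall n, (n <= B)%nat -> (Fl a (upd b n r) <-> Fl a (upd b 0 r))).
  { apply chain_iff. intros n Hn. rewrite <- shift_upd by auto.
    assert (Hin : in_box B (upd b n r)) by (apply in_box_upd; auto; lia).
    eapply proj1. apply (PL a b (upd b n r) Ha Hb N Hin).
    rewrite coord_upd_other; auto. rewrite coord_upd_same; auto. }
  rewrite <- (upd_coord b r) at 1 by auto.
  rewrite (CH (coord b r)) by auto. rewrite (CH v) by auto. tauto.
Qed.

Lemma flip_layer a r r' : (1 <= a <= 3)%nat -> in_box B r -> (coord a r < B)%nat ->
  in_box B r' -> coord a r' = coord a r -> Fl a r -> Fl a r'.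
Proof.
  intros Ha Hr Hc Hr' E F.
  destruct r as [[x y] z], r' as [[x' y'] z']. unfold in_box in *; simpl in *.
  dir a; simpl in *.
  - rewrite (flip_upd 1 2 _ y') in F by (unfold in_box in *; simpl; lia). simpl in F.
    rewrite (flip_upd 1 3 _ z') in F by (unfold in_box in *; simpl; lia). simpl in F. subst; auto.
  - rewrite (flip_upd 2 1 _ x') in F by (unfold in_box in *; simpl; lia). simpl in F.
    rewrite (flip_upd 2 3 _ z') in F by (unfold in_box in *; simpl; lia). simpl in F. subst; auto.
  - rewrite (flip_upd 3 1 _ x') in F by (unfold in_box in *; simpl; lia). simpl in F.
    rewrite (flip_upd 3 2 _ y') in F by (unfold in_box in *; simpl; lia). simpl in F. subst; auto.
Qed.

Lemma flip_unique a b r r' : (1 <= a <= 3)%nat -> (1 <= b <= 3)%nat ->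
  in_box B r -> (coord a r < B)%nat -> in_box B r' -> (coord b r' < B)%nat ->
  Fl a r -> Fl b r' -> a = b.
Proof.
  intros Ha Hb Hr Hc Hr' Hc' F1 F2. destruct (Nat.eq_dec a b) as [|N]; auto. exfalso.
  set (q := upd b (coord b r') r).
  assert (Hq : in_box B q) by (apply in_box_upd; auto; lia).
  assert (Q1 : coord a q = coord a r) by (apply coord_upd_other; auto).
  assert (Q2 : coord b q = coord b r') by (apply coord_upd_same; auto).
  assert (F1' : Fl a q) by (apply (flip_layer a r q); auto).
  assert (F2' : Fl b q) by (apply (flip_layer b r' q); auto; lia).
  destruct (PL a b q Ha Hb N Hq ltac:(lia) ltac:(lia)) as [_ X]. tauto.
Qed.
End Flips.

Lemma reach3 B (P : site -> nat -> Prop) :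
  P (0,0,0)%nat 0%nat ->
  (forall a r k, (1 <= a <= 3)%nat -> in_box B r -> in_box B (shift a r) -> P r k -> P (shift a r) (S k)) ->
  forall r, in_box B r -> exists k, (k <= 3*B)%nat /\ P r k.
Proof.
  intros H0 HS [[x y] z] Hr. unfold in_box in Hr; simpl in Hr.
  assert (A1 : forall x', (x' <= x)%nat -> P (x',0,0)%nat x').
  { induction x'; intro; auto. apply (HS 1%nat (x',0,0)%nat); try (unfold in_box; simpl; lia). apply IHx'; lia. }
  assert (A2 : forall y', (y' <= y)%nat -> P (x,y',0)%nat (x+y')%nat).
  { induction y'; intro. rewrite Nat.add_0_r; auto.
    replace (x + S y')%nat with (S (x + y')) by lia.
    apply (HS 2%nat (x,y',0)%nat); try (unfold in_box; simpl; lia). apply IHy'; lia. }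
  assert (A3 : forall z', (z' <= z)%nat -> P (x,y,z')%nat (x+y+z')%nat).
  { induction z'; intro. rewrite Nat.add_0_r; auto.
    replace (x + y + S z')%nat with (S (x + y + z')) by lia.
    apply (HS 3%nat (x,y,z')%nat); try (unfold in_box; simpl; lia). apply IHz'; lia. }
  exists (x+y+z)%nat. split. lia. apply A3; lia.
Qed.

Lemma reach_layer B a j (P : site -> nat -> Prop) : (1 <= a <= 3)%nat ->
  P (base a j) 0%nat ->
  (forall d r k, (1 <= d <= 3)%nat -> d <> a -> in_box B r -> in_box B (shift d r) -> coord a r = j ->
     P r k -> P (shift d r) (S k)) ->
  forall r, in_box B r -> coord a r = j -> exists k, (k <= 2*B)%nat /\ P r k.
Proof.
  intros Ha H0 HS [[x y] z] Hr Hj. unfold in_box in Hr; simpl in Hr.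
  dir a; simpl in *; subst j.
  - assert (A2 : forall y', (y' <= y)%nat -> P (x,y',0)%nat y').
    { induction y'; intro; auto. apply (HS 2%nat (x,y',0)%nat); try (unfold in_box; simpl; lia). apply IHy'; lia. }
    assert (A3 : forall z', (z' <= z)%nat -> P (x,y,z')%nat (y+z')%nat).
    { induction z'; intro. rewrite Nat.add_0_r; auto.
      replace (y + S z')%nat with (S (y + z')) by lia.
      apply (HS 3%nat (x,y,z')%nat); try (unfold in_box; simpl; lia). apply IHz'; lia. }
    exists (y+z)%nat. split. lia. apply A3; lia.
  - assert (A2 : forall x', (x' <= x)%nat -> P (x',y,0)%nat x').
    { induction x'; intro; auto. apply (HS 1%nat (x',y,0)%nat); try (unfold in_box; simpl; lia). apply IHx'; lia. }
    assert (A3 : forall z', (z' <= z)%nat -> P (x,y,z')%nat (x+z')%nat).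
    { induction z'; intro. rewrite Nat.add_0_r; auto.
      replace (x + S z')%nat with (S (x + z')) by lia.
      apply (HS 3%nat (x,y,z')%nat); try (unfold in_box; simpl; lia). apply IHz'; lia. }
    exists (x+z)%nat. split. lia. apply A3; lia.
  - assert (A2 : forall x', (x' <= x)%nat -> P (x',0,z)%nat x').
    { induction x'; intro; auto. apply (HS 1%nat (x',0,z)%nat); try (unfold in_box; simpl; lia). apply IHx'; lia. }
    assert (A3 : forall y', (y' <= y)%nat -> P (x,y',z)%nat (x+y')%nat).
    { induction y'; intro. rewrite Nat.add_0_r; auto.
      replace (x + S y')%nat with (S (x + y')) by lia.
      apply (HS 2%nat (x,y',z)%nat); try (unfold in_box; simpl; lia). apply IHy'; lia. }
    exists (x+y)%nat. split. lia. apply A3; lia.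
Qed.

Lemma spec_to_tau (n : Z) : exists tau : nat, (1 <= tau <= 6)%nat /\
  forall x d, near_mod x (IZR n * (PI/3)) d -> near_mod x (PI/3 * INR tau) d.
Proof.
  exists (Z.to_nat ((n - 1) mod 6 + 1)). split.
  - assert (0 <= (n-1) mod 6 < 6)%Z by (apply Z.mod_pos_bound; lia). lia.
  - intros x d H. rewrite INR_IZR_INZ, Z2Nat.id by (assert (0 <= (n-1) mod 6 < 6)%Z by (apply Z.mod_pos_bound; lia); lia).
    rewrite Rmult_comm. apply (SPEQ x n); auto. Z.div_mod_to_equations. lia.
Qed.

Lemma near_cos_edge a x y g : Rabs (cos (x - phi a) - cos (y - phi a)) < g*g -> 0 <= g ->
  near_mod y x (5*g) \/ near_mod y (2*phi a - x) (5*g).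
Proof.
  intros H Hg. destruct (COARSE _ _ _ Hg H) as [C|C]; [left|right];
  apply (near_congr _ _ _ _ _ C); exists 0%Z; left; simpl; ring.
Qed.

Lemma fine_edge a x y g S : Rabs (cos (x - phi a) - cos (y - phi a)) < g*g -> 0 < g ->
  250*g <= S -> S <= Rabs (sin (x - phi a)) ->
  (near_mod y x (5*g) -> near_mod y x (11/10*(g*g)/S)) /\
  (near_mod y (2*phi a - x) (5*g) -> near_mod y (2*phi a - x) (11/10*(g*g)/S)).
Proof.
  intros H Hg HS HSu. destruct (FINE _ _ _ _ Hg HS HSu H) as [F1 F2]. split; intro N.
  - assert (N' : near_mod (y - phi a) (x - phi a) (5*g)) by (apply (near_congr _ _ _ _ _ N); exists 0%Z; left; simpl; ring).
    specialize (F1 N'). apply (near_congr _ _ _ _ _ F1); exists 0%Z; left; simpl; ring.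
  - assert (N' : near_mod (y - phi a) (-(x - phi a)) (5*g)) by (apply (near_congr _ _ _ _ _ N); exists 0%Z; left; simpl; ring).
    specialize (F2 N'). apply (near_congr _ _ _ _ _ F2); exists 0%Z; left; simpl; ring.
Qed.

Lemma Far_weak x m1 m2 : Far x m1 -> m2 <= m1 -> Far x m2.
Proof. intros H Hm n. specialize (H n). lra. Qed.

Lemma Far_refl_far x mu e a : Far x mu -> near_mod (2*phi a - x) x e -> 2*mu < e.
Proof.
  intros HF [k Hk]. specialize (HF (K a - 3*k)%Z). revert HF. pushZ. rewrite phi_K in Hk. intro HF.
  replace (2 * (IZR (K a) * (PI / 3)) - x - x - 2 * PI * IZR k) with (- (2 * (x - (IZR (K a) - 3 * IZR k) * (PI / 3)))) in Hk by field.
  rewrite Rabs_Ropp, Rabs_mult, (Rabs_pos_eq 2) in Hk by lra. lra.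
Qed.

Lemma refl_refl a x : 2*phi a - (2*phi a - x) = x.
Proof. ring. Qed.

Lemma SEL (s : nat) (Del th0 psi : R) : 0 < Del -> INR s * Del > 4 * PI ->
  exists i, (1 <= i <= s)%nat /\ near_mod psi (theta_star th0 s i) (Del/4).
Proof.
  intros HD Hs. pose proof PI_gt3.
  assert (Hs0 : 0 < INR s) by (destruct (Rle_dec (INR s) 0); [nra|lra]).
  assert (Hs1 : (1 <= s)%nat) by (destruct s; [simpl in Hs0; lra| lia]).
  set (u := (psi - th0) * INR s / (2*PI)).
  destruct (archimed (u + /2)) as [A1 A2].
  set (n := (up (u + /2) - 1)%Z).
  assert (Hn : u - /2 < IZR n <= u + /2) by (unfold n; rewrite minus_IZR; simpl; lra).
  set (zs := Z.of_nat s).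
  set (i := ((n - 1) mod zs + 1)%Z).
  assert (Hzs : (0 < zs)%Z) by (unfold zs; lia).
  assert (Hi : (1 <= i <= zs)%Z) by (unfold i; assert (0 <= (n-1) mod zs < zs)%Z by (apply Z.mod_pos_bound; lia); lia).
  assert (Q : exists q, (n = i + zs * q)%Z) by (exists ((n-1)/zs)%Z; unfold i; Z.div_mod_to_equations; lia).
  destruct Q as [q Q].
  exists (Z.to_nat i). split. lia.
  exists q. unfold theta_star. rewrite INR_IZR_INZ, Z2Nat.id by lia.
  assert (Es : IZR zs = INR s) by (unfold zs; rewrite <- INR_IZR_INZ; auto).
  assert (En : IZR n = IZR i + INR s * IZR q) by (rewrite Q; pushZ; rewrite Es; ring).
  assert (Eu : psi - th0 = u * (2*PI) / INR s) by (unfold u; field; lra).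
  replace (psi - (th0 + 2 * PI * IZR i / INR s) - 2 * PI * IZR q) with ((u - IZR n) * (2*PI) / INR s).
  2:{ rewrite En. replace psi with (th0 + u * (2 * PI) / INR s) by lra. field. lra. }
  unfold Rdiv. rewrite Rabs_mult, Rabs_mult, (Rabs_pos_eq (2*PI)) by lra.
  rewrite (Rabs_pos_eq (/ INR s)) by (apply Rlt_le, Rinv_0_lt_compat; lra).
  assert (Rabs (u - IZR n) <= /2) by (apply Rabs_le; lra).
  assert (2*PI/INR s < Del/2).
  { apply Rmult_lt_reg_r with (INR s); auto. field_simplify; lra. }
  assert (Rabs (u - IZR n) * (2*PI) * / INR s <= /2 * (2*PI) * / INR s).
  { apply Rmult_le_compat_r. apply Rlt_le, Rinv_0_lt_compat; lra. apply Rmult_le_compat_r; lra. }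
  unfold Rdiv in *. lra.
Qed.

Section Main.
Variables (kap g : R) (B : nat) (th : config).
Hypothesis Hk : 0 < kap.
Hypothesis Hkc : kap <= 1/1000.
Hypothesis Hg : 0 < g.
Hypothesis HBg : INR B * g <= kap / 1000.
Hypothesis HB1 : (1 <= B)%nat.
Hypothesis EDGE : forall a r, (1 <= a <= 3)%nat -> in_box B r -> in_box B (shift a r) ->
   Rabs (cos (th r - phi a) - cos (th (shift a r) - phi a)) < g*g.
Hypothesis NCB : ~ cond_b kap B th.

Lemma Bge1 : 1 <= INR B.
Proof. apply (le_INR 1). auto. Qed.
Lemma g_small : g <= kap/1000.
Proof. pose proof Bge1. nra. Qed.
Lemma Bgg : INR B * (g*g) <= kap/1000 * (kap/1000).
Proof. pose proof Bge1. pose proof g_small. assert (INR B * g * g <= kap/1000 * g) by nra. nra. Qed.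

Lemma CE a r : (1 <= a <= 3)%nat -> in_box B r -> in_box B (shift a r) ->
  near_mod (th (shift a r)) (th r) (5*g) \/ near_mod (th (shift a r)) (2*phi a - th r) (5*g).
Proof. intros. apply near_cos_edge; auto. lra. Qed.

Lemma GOODC (tn : Z) d : d <= 2*kap -> (forall r, in_box B r -> near_mod (th r) (IZR tn * (PI/3)) d) -> False.
Proof.
  intros Hd H. destruct (spec_to_tau tn) as [tau [Ht Hc]]. apply NCB. exists tau. split; auto.
  intros r Hr. apply Hc. eapply near_weak; eauto.
Qed.

Lemma aligned_spec a ts : (1 <= a <= 3)%nat -> aligned kap a ts ->
  exists tn, near_mod ts (IZR tn * (PI/3)) kap /\ ((2 * K a - tn - tn) mod 6 = 0)%Z /\ ((tn - K a) mod 3 = 0)%Z.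
Proof.
  intros Ha [H|H].
  - exists (K a). rewrite <- phi_K. split; auto. split; Z.div_mod_to_equations; lia.
  - exists (K a + 3)%Z. split. revert H. rewrite phi_K. pushZ.
    replace ((IZR (K a) + 3) * (PI / 3)) with (IZR (K a) * (PI / 3) + PI) by field. auto.
    split; Z.div_mod_to_equations; lia.
Qed.


Lemma le_INR3 k : (k <= 3*B)%nat -> INR k <= 3 * INR B.
Proof. intro H. apply le_INR in H. rewrite mult_INR in H. simpl in H. lra. Qed.
Lemma le_INR2 k : (k <= 2*B)%nat -> INR k <= 2 * INR B.
Proof. intro H. apply le_INR in H. rewrite mult_INR in H. simpl in H. lra. Qed.

Definition GoalT (Del ts : R) : Prop :=
  bad0 kap (g*g) Del B ts th \/
  exists a j : nat, (1 <= a <= 3)%nat /\ (1 <= j <= B)%nat /\ bad_aj kap (g*g) Del B ts a j th.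

Definition muA := kap - 15 * INR B * g.
Definition epsA := 11/10*(g*g)/(0.9*muA).
Definition FlA (a : nat) (r : site) := ~ near_mod (th (shift a r)) (th r) (20*g).

Lemma muA_ge : 0.985 * kap <= muA.
Proof. unfold muA. lra. Qed.
Lemma muA_le : muA <= kap.
Proof. unfold muA. pose proof Bge1. nra. Qed.
Lemma epsA_pos : 0 < epsA.
Proof. unfold epsA. pose proof muA_ge. apply Rdiv_lt_0_compat; nra. Qed.
Lemma epsA_bound : epsA <= 1.25 * (g*g) / kap.
Proof.
  unfold epsA. pose proof muA_ge.
  replace (11/10*(g*g)/(0.9*muA)) with ((g*g)/kap * (11/10*kap/(0.9*muA))) by (field; lra).
  replace (1.25 * (g*g)/kap) with ((g*g)/kap * 1.25) by (field; lra).
  apply Rmult_le_compat_l. apply Rlt_le, Rdiv_lt_0_compat; nra.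
  apply Rmult_le_reg_r with (0.9*muA). nra. unfold Rdiv. rewrite Rmult_assoc, Rinv_l by lra. lra.
Qed.

Section CaseA.
Hypothesis FarA : Far (th (0,0,0)%nat) kap.

Lemma A_far r : in_box B r -> Far (th r) muA.
Proof.
  intros Hr.
  destruct (reach3 B (fun r k => Far (th r) (kap - 5*g*INR k))) with (r := r) as [k [Hk' Hf]]; auto.
  - simpl. replace (kap - 5*g*0) with kap by ring. auto.
  - intros a r' k Ha H1 H2 Hf. rewrite S_INR.
    replace (kap - 5*g*(INR k + 1)) with ((kap - 5*g*INR k) - 5*g) by ring.
    apply (Far_prop (th r')) with a; auto. apply CE; auto.
  - apply Far_weak with (kap - 5*g*INR k); auto. unfold muA. pose proof (le_INR3 k Hk'). nra.
Qed.

Lemma A_PL : forall a b r, (1 <= a <= 3)%nat -> (1 <= b <= 3)%nat -> a <> b -> in_box B r ->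
  (coord a r < B)%nat -> (coord b r < B)%nat ->
  (FlA a r <-> FlA a (shift b r)) /\ ~ (FlA a r /\ FlA b r).
Proof.
  intros a b r Ha Hb N Hr Hca Hcb.
  assert (Hra : in_box B (shift a r)) by (apply in_box_shift; auto).
  assert (Hrb : in_box B (shift b r)) by (apply in_box_shift; auto).
  assert (Hrab : in_box B (shift b (shift a r))) by (apply in_box_shift; auto; rewrite coord_shift_other; auto).
  assert (Hrba : in_box B (shift a (shift b r))) by (rewrite shift_comm; auto).
  pose proof muA_ge. pose proof g_small.
  assert (Ew2 := CE a (shift b r) Ha Hrb Hrba). rewrite shift_comm in Ew2 by auto.
  destruct (PLAQ RA (th r) (th (shift a r)) (th (shift b r)) (th (shift b (shift a r))) (5*g) (5*g) (20*g) (40*g) a b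
    (COMB_A a b Ha Hb N)
    (fun p1 p2 H1 H2 Hn => SEPA (th r) muA p1 p2 (40*g) (A_far r Hr) H1 H2 Hn ltac:(lra) ltac:(lra))
    (fun p1 p2 _ _ HR => NRA (th r) p1 p2 (5*g) HR ltac:(lra))
    ltac:(lra) ltac:(lra) ltac:(lra) ltac:(lra)
    (CE a r Ha Hr Hra) (CE b r Hb Hr Hrb) (CE b (shift a r) Hb Hra Hrab) Ew2) as [C1 [C2 C3]].
  unfold FlA. rewrite (shift_comm a b) by auto. split; tauto.
Qed.

Lemma A_fine a r : (1 <= a <= 3)%nat -> in_box B r -> in_box B (shift a r) ->
  (~ FlA a r -> near_mod (th (shift a r)) (th r) epsA) /\
  (FlA a r -> near_mod (th (shift a r)) (2*phi a - th r) epsA).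
Proof.
  intros Ha Hr Hr'. pose proof muA_ge. pose proof muA_le. pose proof g_small.
  assert (HS := Far_sens (th r) muA a (A_far r Hr) ltac:(lra) ltac:(lra)).
  destruct (fine_edge a (th r) (th (shift a r)) g (0.9*muA) (EDGE a r Ha Hr Hr') Hg ltac:(lra) HS) as [F1 F2].
  unfold epsA. split; intro HF; unfold FlA in HF.
  - apply NNPP in HF. destruct (CE a r Ha Hr Hr') as [C|C]; auto. exfalso.
    assert (X : near_mod (2*phi a - th r) (th r) (5*g + 20*g)) by (eapply near_trans; [apply near_sym; exact C| exact HF]).
    pose proof (Far_refl_far _ _ _ _ (A_far r Hr) X). lra.
  - destruct (CE a r Ha Hr Hr') as [C|C]; auto. exfalso. apply HF. eapply near_weak; eauto. lra.
Qed.


Lemma A_main Del : Del = 12 * INR B * (g*g) / kap -> badSW kap (g*g) B th ->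
  exists psi, forall ts, near_mod psi ts (Del/4) -> GoalT Del ts.
Proof.
  intros HDel HSW. pose proof epsA_pos as He. pose proof epsA_bound as Heb.
  pose proof Bge1 as HB. pose proof Bgg as HBgg.
  assert (HDp : 0 < Del) by (rewrite HDel; apply Rdiv_lt_0_compat; nra).
  assert (HEB : (1 + 3 * INR B) * epsA <= 5 * INR B * (g*g) / kap).
  { apply Rle_trans with ((1 + 3 * INR B) * (1.25 * (g * g) / kap)).
    apply Rmult_le_compat_l; lra. unfold Rdiv. assert (0 < / kap) by (apply Rinv_0_lt_compat; lra).
    assert (0 <= g*g) by nra. nra. }
  assert (HDel' : Del = 12 * (INR B * (g*g) / kap)) by (rewrite HDel; field; lra).
  assert (Hbg : 0 < INR B * (g*g) / kap) by (apply Rdiv_lt_0_compat; nra).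
  assert (Hsmall : INR B * (g*g) / kap <= kap / 1000000).
  { apply Rmult_le_reg_r with kap; auto. unfold Rdiv. rewrite Rmult_assoc, Rinv_l by lra. nra. }
  destruct (classic (exists a r, (1 <= a <= 3)%nat /\ in_box B r /\ in_box B (shift a r) /\ FlA a r))
    as [[a [r0 [Ha [Hr0 [Hr0' F0]]]]] | NF].
  2:{
    exists (th (0,0,0)%nat). intros ts Hts. left. split. exact (proj1 HSW).
    intros r Hr.
    destruct (reach3 B (fun r k => near_mod (th r) (th (0,0,0)%nat) ((1 + INR k) * epsA))) with (r := r)
      as [k [Hk' Hn]]; auto.
    - simpl. apply near_refl. lra.
    - intros d r' k Hd H1 H2 Hn. rewrite S_INR.
      assert (NF' : ~ FlA d r') by (intro; apply NF; eauto 10).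
      pose proof (proj1 (A_fine d r' Hd H1 H2) NF').
      eapply near_weak. eapply near_trans; eauto. lra.
    - pose proof (le_INR3 k Hk').
      eapply near_weak. eapply near_trans; eauto. nra. }
  assert (Hc0 : (coord a r0 < B)%nat) by (eapply in_box_shift_lt; eauto).
  set (jj := coord a r0) in *.
  set (rs := base a jj).
  assert (Hrs : in_box B rs) by (apply in_box_base; auto; lia).
  assert (Hcrs : coord a rs = jj) by (apply coord_base; auto).
  assert (FLU : forall b r, (1 <= b <= 3)%nat -> in_box B r -> in_box B (shift b r) -> FlA b r -> b = a).
  { intros b r Hb H1 H2 F. symmetry. apply (flip_unique B FlA A_PL a b r0 r); auto.
    eapply in_box_shift_lt; eauto. }
  assert (Frs : FlA a rs) by (apply (flip_layer B FlA A_PL a r0 rs); auto).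
  assert (Hrs' : in_box B (shift a rs)) by (apply in_box_shift; auto; lia).
  exists (th rs). intros ts Hts. right. exists a, (S jj). split; auto. split. lia.
  assert (L0 : forall q, in_box B q -> coord a q = jj -> near_mod (th q) (th rs) ((1 + 2 * INR B) * epsA)).
  { intros q Hq Hcq.
    destruct (reach_layer B a jj (fun q k => near_mod (th q) (th rs) ((1 + INR k) * epsA)) Ha) with (r := q)
      as [k [Hk' Hn]]; auto.
    - simpl. apply near_refl. lra.
    - intros d r' k Hd Hda H1 H2 Hc Hn. rewrite S_INR.
      assert (NF' : ~ FlA d r') by (intro F; apply Hda; exact (FLU d r' Hd H1 H2 F)).
      pose proof (proj1 (A_fine d r' Hd H1 H2) NF').
      eapply near_weak. eapply near_trans; eauto. lra.
    - pose proof (le_INR2 k Hk'). eapply near_weak; eauto. nra. }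
  assert (L1 : forall q, in_box B q -> coord a q = S jj -> near_mod (th q) (2*phi a - th rs) ((1 + 2 * INR B) * epsA)).
  { intros q Hq Hcq.
    destruct (reach_layer B a (S jj) (fun q k => near_mod (th q) (2*phi a - th rs) ((1 + INR k) * epsA)) Ha) with (r := q)
      as [k [Hk' Hn]]; auto.
    - simpl. unfold rs. rewrite <- shift_base by auto. fold rs.
      eapply near_weak. apply (proj2 (A_fine a rs Ha Hrs Hrs') Frs). lra.
    - intros d r' k Hd Hda H1 H2 Hc Hn. rewrite S_INR.
      assert (NF' : ~ FlA d r') by (intro F; apply Hda; exact (FLU d r' Hd H1 H2 F)).
      pose proof (proj1 (A_fine d r' Hd H1 H2) NF').
      eapply near_weak. eapply near_trans; eauto. lra.
    - pose proof (le_INR2 k Hk'). eapply near_weak; eauto. nra. }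
  assert (HL : (1 + 2 * INR B) * epsA + Del/4 < Del) by nra.
  split; [|split; [exact HSW| split]].
  3:{ intros q Hq Hcq. eapply near_weak. eapply near_trans. apply L1; auto.
      apply near_refl_map; exact Hts. lra. }
  2:{ intros q Hq Hcq. replace (S jj - 1)%nat with jj in Hcq by lia.
      eapply near_weak. eapply near_trans. apply L0; auto. exact Hts. lra. }
  intro Hal. destruct (aligned_spec a ts Ha Hal) as [tn [Htn [Hm6 _]]].
  set (th0 := th (0,0,0)%nat).
  set (E := (1 + 3 * INR B) * epsA).
  assert (GL : forall r, in_box B r -> near_mod (th r) th0 E \/ near_mod (th r) (2*phi a - th0) E).
  { intros r Hr.
    destruct (reach3 B (fun r k => near_mod (th r) th0 ((1 + INR k) * epsA) \/
                                     near_mod (th r) (2*phi a - th0) ((1 + INR k) * epsA))) with (r := r)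
      as [k [Hk' Hn]]; auto.
    - left. simpl. apply near_refl. lra.
    - intros d r' k Hd H1 H2 Hn. rewrite S_INR.
      replace ((1 + (INR k + 1)) * epsA) with (epsA + (1 + INR k) * epsA) by ring.
      destruct (classic (FlA d r')) as [F|F].
      + assert (d = a) by exact (FLU d r' Hd H1 H2 F). subst d.
        pose proof (proj2 (A_fine a r' Hd H1 H2) F) as X.
        destruct Hn as [Hn|Hn]; [right|left].
        * eapply near_trans. exact X. apply near_refl_map; auto.
        * rewrite <- (refl_refl a th0). eapply near_trans. exact X. apply near_refl_map; auto.
      + pose proof (proj1 (A_fine d r' Hd H1 H2) F) as X.
        destruct Hn as [Hn|Hn]; [left|right]; eapply near_trans; eauto.
    - pose proof (le_INR3 k Hk'). destruct Hn; [left|right]; eapply near_weak; eauto; unfold E; nra. }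
  assert (H0t : near_mod th0 (IZR tn * (PI/3)) (E + Del/4 + kap)).
  { destruct (GL rs Hrs) as [X|X].
    - eapply near_trans. eapply near_trans. apply near_sym, X. exact Hts. exact Htn.
    - apply (SPEQ _ (2 * K a - tn)). Z.div_mod_to_equations; lia.
      rewrite <- refl_special, <- (refl_refl a th0). apply near_refl_map.
      eapply near_trans. eapply near_trans. apply near_sym, X. exact Hts. exact Htn. }
  apply (GOODC tn (E + (E + Del/4 + kap))). unfold E; nra.
  intros r Hr. destruct (GL r Hr) as [X|X].
  - eapply near_trans; eauto.
  - eapply near_trans. exact X. apply (SPEQ _ (2 * K a - tn)). Z.div_mod_to_equations; lia.
    rewrite <- refl_special. apply near_refl_map. auto.
Qed.

End CaseA.

Definition etaB := kap + 15 * INR B * g.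
Definition rhoB := 15*g + 2*etaB.
Definition epsB := 11/10*(g*g)/0.63.
Definition FlB (a : nat) (r : site) := ~ near_mod (th (shift a r)) (th r) rhoB.

Lemma etaB_bounds : kap <= etaB <= 1.015 * kap.
Proof. unfold etaB. pose proof Bge1. split; nra. Qed.

Section CaseB.
Hypothesis Spec0 : exists n0, near_mod (th (0,0,0)%nat) (IZR n0 * (PI/3)) kap.

Lemma B_spec r : in_box B r -> exists n, near_mod (th r) (IZR n * (PI/3)) etaB.
Proof.
  intros Hr.
  destruct (reach3 B (fun r k => exists n, near_mod (th r) (IZR n * (PI/3)) (kap + 5*g*INR k))) with (r := r)
    as [k [Hk' [n Hn]]]; auto.
  - destruct Spec0 as [n0 H0]. exists n0. simpl. replace (kap + 5*g*0) with kap by ring. auto.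
  - intros a r' k Ha H1 H2 [n Hn]. destruct (Spec_prop (th r') (th (shift a r')) n _ _ a Hn (CE a r' Ha H1 H2)) as [n' Hn'].
    exists n'. rewrite S_INR. eapply near_weak; eauto. lra.
  - exists n. eapply near_weak; eauto. unfold etaB. pose proof (le_INR3 k Hk'). nra.
Qed.

Lemma B_PL : forall a b r, (1 <= a <= 3)%nat -> (1 <= b <= 3)%nat -> a <> b -> in_box B r ->
  (coord a r < B)%nat -> (coord b r < B)%nat ->
  (FlB a r <-> FlB a (shift b r)) /\ ~ (FlB a r /\ FlB b r).
Proof.
  intros a b r Ha Hb N Hr Hca Hcb.
  assert (Hra : in_box B (shift a r)) by (apply in_box_shift; auto).
  assert (Hrb : in_box B (shift b r)) by (apply in_box_shift; auto).
  assert (Hrab : in_box B (shift b (shift a r))) by (apply in_box_shift; auto; rewrite coord_shift_other; auto).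
  assert (Hrba : in_box B (shift a (shift b r))) by (rewrite shift_comm; auto).
  pose proof etaB_bounds. pose proof g_small.
  destruct (B_spec r Hr) as [m Hm].
  assert (Ew2 := CE a (shift b r) Ha Hrb Hrba). rewrite shift_comm in Ew2 by auto.
  destruct (PLAQ (RB m) (th r) (th (shift a r)) (th (shift b r)) (th (shift b (shift a r))) (5*g) (2*etaB) rhoB (rhoB + 20*g) a b
    (COMB_B m a b Ha Hb N)
    (fun p1 p2 H1 H2 Hn => SEPB (th r) m etaB p1 p2 (rhoB + 20*g) Hm H1 H2 Hn ltac:(unfold rhoB; lra))
    (fun p1 p2 H1 H2 HR => NRB (th r) m etaB p1 p2 Hm H1 H2 ltac:(lra) HR)
    ltac:(lra) ltac:(lra) ltac:(unfold rhoB; lra) ltac:(lra)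
    (CE a r Ha Hr Hra) (CE b r Hb Hr Hrb) (CE b (shift a r) Hb Hra Hrab) Ew2) as [C1 [C2 C3]].
  unfold FlB. rewrite (shift_comm a b) by auto. split; tauto.
Qed.

Lemma B_same a r n : (1 <= a <= 3)%nat -> in_box B r -> in_box B (shift a r) -> ~ FlB a r ->
  near_mod (th r) (IZR n * (PI/3)) etaB -> near_mod (th (shift a r)) (IZR n * (PI/3)) etaB.
Proof.
  intros Ha Hr Hr' F Hn. apply NNPP in F. pose proof etaB_bounds. pose proof g_small.
  destruct (B_spec _ Hr') as [n' Hn'].
  apply (SPEQ _ n'); auto.
  apply (SPSEP (th (shift a r)) n' n etaB (rhoB + etaB)); auto.
  eapply near_trans; eauto. unfold rhoB; lra.
Qed.

Lemma B_sens_fine a r t : (1 <= a <= 3)%nat -> in_box B r -> in_box B (shift a r) ->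
  near_mod (th r) (IZR t * (PI/3)) etaB -> ((t - K a) mod 3 <> 0)%Z ->
  (near_mod (th (shift a r)) (th r) (5*g) -> near_mod (th (shift a r)) (th r) epsB) /\
  (near_mod (th (shift a r)) (2*phi a - th r) (5*g) -> near_mod (th (shift a r)) (2*phi a - th r) epsB).
Proof.
  intros Ha Hr Hr' Ht Htk. pose proof etaB_bounds. pose proof g_small.
  apply (fine_edge a (th r) (th (shift a r)) g 0.63); auto. lra.
  apply (Spec_sens _ t etaB); auto; lra.
Qed.

Lemma B_nof : (forall a r, (1 <= a <= 3)%nat -> in_box B r -> in_box B (shift a r) -> ~ FlB a r) -> False.
Proof.
  intros NF. destruct Spec0 as [n0 H0]. pose proof etaB_bounds.
  apply (GOODC n0 etaB). lra.
  intros r Hr.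
  destruct (reach3 B (fun r k => near_mod (th r) (IZR n0 * (PI/3)) etaB)) with (r := r) as [k [_ Hn]]; auto.
  - eapply near_weak; eauto. lra.
  - intros a r' k Ha H1 H2 Hn. apply B_same; auto.
Qed.


Lemma dir_choice a d t t' : (1 <= a <= 3)%nat -> (1 <= d <= 3)%nat -> d <> a ->
  ((t' - (2 * K a - t)) mod 6 = 0)%Z -> ((t - K a) mod 3 <> 0)%Z ->
  ((t - K d) mod 3 <> 0)%Z \/ ((t' - K d) mod 3 <> 0)%Z.
Proof.
  intros Ha Hd N H1 H2.
  assert (Ca : a = 1%nat \/ a = 2%nat \/ a = 3%nat) by lia.
  assert (Cd : d = 1%nat \/ d = 2%nat \/ d = 3%nat) by lia.
  destruct Ca as [->|[->| ->]]; destruct Cd as [->|[->| ->]]; try lia; unfold K in *;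
  Z.div_mod_to_equations; lia.
Qed.

Lemma B_main Del : Del = 12 * INR B * (g*g) / kap -> badSW kap (g*g) B th ->
  exists psi, forall ts, near_mod psi ts (Del/4) -> GoalT Del ts.
Proof.
  intros HDel HSW. pose proof etaB_bounds as Heta. pose proof g_small as Hgs.
  pose proof Bge1 as HB. pose proof Bgg as HBgg.
  assert (He : 0 < epsB) by (unfold epsB; nra).
  assert (HDp : 0 < Del) by (rewrite HDel; apply Rdiv_lt_0_compat; nra).
  assert (HDel' : Del = 12 * (INR B * (g*g) / kap)) by (rewrite HDel; field; lra).
  assert (Hbg : 0 < INR B * (g*g) / kap) by (apply Rdiv_lt_0_compat; nra).
  assert (Hsmall : INR B * (g*g) / kap <= kap / 1000000).
  { apply Rmult_le_reg_r with kap; auto. unfold Rdiv. rewrite Rmult_assoc, Rinv_l by lra. nra. }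
  assert (HEB : (6 * INR B + 2) * epsB + Del/4 < Del).
  { assert (X : INR B * (g*g) <= kap * (INR B * (g * g) / kap)) by (right; field; lra).
    unfold epsB. rewrite HDel'. nra. }
  destruct (classic (exists a r, (1 <= a <= 3)%nat /\ in_box B r /\ in_box B (shift a r) /\ FlB a r))
    as [[a [r0 [Ha [Hr0 [Hr0' F0]]]]] | NF].
  2:{ exfalso. apply B_nof. intros a r Ha H1 H2 F. apply NF. eauto 10. }
  assert (Hc0 : (coord a r0 < B)%nat) by (eapply in_box_shift_lt; eauto).
  set (jj := coord a r0) in *.
  set (rs := base a jj).
  assert (Hrs : in_box B rs) by (apply in_box_base; auto; lia).
  assert (Hcrs : coord a rs = jj) by (apply coord_base; auto).
  assert (FLU : forall b r, (1 <= b <= 3)%nat -> in_box B r -> in_box B (shift b r) -> FlB b r -> b = a).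
  { intros b r Hb H1 H2 F. symmetry. apply (flip_unique B FlB B_PL a b r0 r); auto.
    eapply in_box_shift_lt; eauto. }
  assert (FL : forall q, in_box B q -> coord a q = jj -> FlB a q)
    by (intros q Hq Hcq; apply (flip_layer B FlB B_PL a r0 q); auto).
  assert (Frs : FlB a rs) by (apply FL; auto).
  assert (Hrs' : in_box B (shift a rs)) by (apply in_box_shift; auto; lia).
  destruct (B_spec rs Hrs) as [t Ht].
  destruct (B_spec (shift a rs) Hrs') as [t' Ht'].
  assert (Hrho : 5*g <= rhoB) by (unfold rhoB; lra).
  assert (Htt : ((t' - (2 * K a - t)) mod 6 = 0)%Z).
  { destruct (CE a rs Ha Hrs Hrs') as [C|C].
    - exfalso. apply Frs. eapply near_weak; eauto.
    - apply (SPSEP (th (shift a rs)) t' (2 * K a - t) etaB (5*g + etaB)); auto; [|lra].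
      rewrite <- refl_special. eapply near_trans. exact C. apply near_refl_map; auto. }
  assert (Htl : ((t - K a) mod 3 <> 0)%Z).
  { intro Z0. apply Frs. apply (near_weak _ _ (etaB + etaB)); [|unfold rhoB; lra].
    eapply near_trans. exact Ht'. apply near_sym.
    apply (SPEQ _ t). Z.div_mod_to_equations; lia. auto. }
  assert (LT0 : forall q, in_box B q -> coord a q = jj -> near_mod (th q) (IZR t * (PI/3)) etaB).
  { intros q Hq Hcq.
    destruct (reach_layer B a jj (fun q k => near_mod (th q) (IZR t * (PI/3)) etaB) Ha) with (r := q)
      as [k [_ Hn]]; auto.
    intros d r' k Hd Hda H1 H2 Hc Hn. apply B_same; auto.
    intro F; apply Hda; exact (FLU d r' Hd H1 H2 F). }
  assert (LT1 : forall q, in_box B q -> coord a q = S jj -> near_mod (th q) (IZR t' * (PI/3)) etaB).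
  { intros q Hq Hcq.
    destruct (reach_layer B a (S jj) (fun q k => near_mod (th q) (IZR t' * (PI/3)) etaB) Ha) with (r := q)
      as [k [_ Hn]]; auto.
    - unfold rs in Ht'. rewrite shift_base in Ht' by auto. auto.
    - intros d r' k Hd Hda H1 H2 Hc Hn. apply B_same; auto.
      intro F; apply Hda; exact (FLU d r' Hd H1 H2 F). }
  assert (CR : forall q, in_box B q -> coord a q = jj -> in_box B (shift a q) /\
             near_mod (th (shift a q)) (2*phi a - th q) epsB).
  { intros q Hq Hcq. assert (Hq' : in_box B (shift a q)) by (apply in_box_shift; auto; lia).
    split; auto.
    destruct (B_sens_fine a q t Ha Hq Hq' (LT0 q Hq Hcq) Htl) as [F1 F2].
    destruct (CE a q Ha Hq Hq') as [C|C]; auto.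
    exfalso. apply (FL q Hq Hcq). eapply near_weak; eauto. }
  assert (IN : forall d q tt, (1 <= d <= 3)%nat -> d <> a -> in_box B q -> in_box B (shift d q) ->
             near_mod (th q) (IZR tt * (PI/3)) etaB -> near_mod (th (shift d q)) (IZR tt * (PI/3)) etaB ->
             ((tt - K d) mod 3 <> 0)%Z -> near_mod (th (shift d q)) (th q) epsB).
  { intros d q tt Hd Hda Hq Hq' H1 H2 Hm.
    destruct (B_sens_fine d q tt Hd Hq Hq' H1 Hm) as [F1 F2].
    destruct (CE d q Hd Hq Hq') as [C|C]; auto.
    exfalso. apply Hm.
    assert (X : ((2 * K d - tt - tt) mod 6 = 0)%Z).
    { apply (SPSEP (th (shift d q)) (2 * K d - tt) tt (5*g + etaB) etaB); auto; [|lra].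
      rewrite <- refl_special. eapply near_trans. exact C. apply near_refl_map; auto. }
    Z.div_mod_to_equations; lia. }
  assert (SL : forall q, in_box B q -> coord a q = jj ->
     near_mod (th q) (th rs) ((6 * INR B + 1) * epsB) /\
     near_mod (th (shift a q)) (2*phi a - th rs) ((6 * INR B + 2) * epsB)).
  { intros q Hq Hcq.
    destruct (reach_layer B a jj (fun q k => near_mod (th q) (th rs) ((3 * INR k + 1) * epsB) /\
        near_mod (th (shift a q)) (2*phi a - th rs) ((3 * INR k + 2) * epsB)) Ha) with (r := q)
      as [k [Hk' [Hn1 Hn2]]]; auto.
    - fold rs. simpl. split. apply near_refl; lra.
      eapply near_weak. apply (proj2 (CR rs Hrs Hcrs)). lra.
    - intros d q1 k Hd Hda H1 H2 Hc [Hn1 Hn2]. rewrite S_INR.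
      assert (Hc2 : coord a (shift d q1) = jj) by (rewrite coord_shift_other; auto).
      destruct (CR q1 H1 Hc) as [H1a _].
      destruct (CR (shift d q1) H2 Hc2) as [H2a X2].
      destruct (dir_choice a d t t' Ha Hd Hda Htt Htl) as [Dt|Dt].
      + assert (E1 := IN d q1 t Hd Hda H1 H2 (LT0 q1 H1 Hc) (LT0 _ H2 Hc2) Dt).
        assert (N1 : near_mod (th (shift d q1)) (th rs) ((3 * (INR k + 1) + 1) * epsB))
          by (eapply near_weak; [eapply near_trans; eauto| lra]).
        split; auto.
        eapply near_weak. eapply near_trans. exact X2. apply near_refl_map. exact N1. lra.
      + assert (Hs1 : in_box B (shift d (shift a q1))).
        { apply in_box_shift; auto. rewrite coord_shift_other; auto. eapply in_box_shift_lt; eauto. }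
        assert (Hca1 : coord a (shift a q1) = S jj) by (rewrite coord_shift_same; auto).
        assert (E2 := IN d (shift a q1) t' Hd Hda H1a Hs1 (LT1 _ H1a Hca1)
                      (LT1 _ Hs1 ltac:(rewrite coord_shift_other; auto)) Dt).
        rewrite (shift_comm d a) in E2 by auto.
        assert (N2r := near_trans _ _ _ _ _ E2 Hn2).
        assert (N2 : near_mod (th (shift a (shift d q1))) (2*phi a - th rs) ((3 * (INR k + 1) + 2) * epsB))
          by (eapply near_weak; [exact N2r| lra]).
        split; auto.
        assert (Y : near_mod (th (shift d q1)) (2*phi a - th (shift a (shift d q1))) epsB).
        { rewrite <- (refl_refl a (th (shift d q1))). apply near_refl_map. apply near_sym. auto. }
        eapply near_weak. eapply near_trans. exact Y.
        rewrite <- (refl_refl a (th rs)). apply near_refl_map. exact N2r. lra.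
    - pose proof (le_INR2 k Hk'). split; eapply near_weak; eauto; nra. }
  exists (th rs). intros ts Hts. right. exists a, (S jj). split; auto. split. lia.
  split; [|split; [exact HSW| split]].
  3:{ intros q' Hq' Hcq'.
      set (q := upd a jj q').
      assert (Hq : in_box B q) by (apply in_box_upd; auto; lia).
      assert (Hcq : coord a q = jj) by (apply coord_upd_same; auto).
      assert (Eq : shift a q = q') by (unfold q; replace jj with (coord a q' - 1)%nat by lia;
                                       apply shift_upd_self; auto; lia).
      destruct (SL q Hq Hcq) as [_ X]. rewrite Eq in X.
      eapply near_weak. eapply near_trans. exact X. apply near_refl_map; exact Hts. lra. }
  2:{ intros q Hq Hcq. replace (S jj - 1)%nat with jj in Hcq by lia.
      destruct (SL q Hq Hcq) as [X _].
      eapply near_weak. eapply near_trans. exact X. exact Hts. lra. }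
  intro Hal. destruct (aligned_spec a ts Ha Hal) as [tn [Htn [_ Hm3]]].
  apply Htl.
  assert (X : ((t - tn) mod 6 = 0)%Z).
  { apply (SPSEP (th rs) t tn etaB (Del/4 + kap)); auto. eapply near_trans; eauto. lra. }
  Z.div_mod_to_equations; lia.
Qed.

End CaseB.
End Main.

Theorem theorem6p4 :
  exists c0 : R, 0 < c0 /\
  forall (kap Gam Del th0 : R) (B s : nat),
    0 < kap -> 0 < Gam ->
    kap <= c0 ->
    INR B * sqrt Gam <= c0 * kap ->
    Del = 12 * INR B * Gam / kap ->
    INR s * Del > 4 * PI ->
    forall th : config,
      badSW kap Gam B th ->
      exists i : nat, (1 <= i <= s)%nat /\
        (bad0 kap Gam Del B (theta_star th0 s i) th \/
         exists a j : nat, (1 <= a <= 3)%nat /\ (1 <= j <= B)%nat /\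
           bad_aj kap Gam Del B (theta_star th0 s i) a j th).
Proof.
  exists (1/1000). split; [lra|].
  intros kap Gam Del th0 B s Hk HG Hkc HBs HDel Hs th HSW.
  pose proof PI_gt3.
  set (g := sqrt Gam) in *.
  assert (Hg : 0 < g) by (apply sqrt_lt_R0; auto).
  assert (HGg : Gam = g * g) by (unfold g; rewrite sqrt_sqrt; lra).
  assert (HB1 : (1 <= B)%nat).
  { destruct B. exfalso. rewrite HDel in Hs. simpl in Hs. nra. lia. }
  assert (HBg : INR B * g <= kap / 1000) by lra.
  assert (EDGE : forall a r, (1 <= a <= 3)%nat -> in_box B r -> in_box B (shift a r) ->
     Rabs (cos (th r - phi a) - cos (th (shift a r) - phi a)) < g*g).
  { intros a r Ha H1 H2. rewrite <- HGg. destruct (Rlt_dec (Rabs (cos (th r - phi a) - cos (th (shift a r) - phi a))) Gam) as [X|X]; auto.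
    exfalso. apply (proj2 HSW). exists a, r. unfold Scomp. split; [auto|split;[auto|split;[auto|lra]]]. }
  assert (NCB : ~ cond_b kap B th).
  { intro C. apply (proj1 HSW). split; auto. intros a r Ha H1 H2. unfold Scomp. rewrite HGg. apply EDGE; auto. }
  rewrite HGg in HDel, HSW |- *.
  assert (HBR := le_INR 1 B HB1). simpl in HBR.
  assert (HDp : 0 < Del) by (rewrite HDel; apply Rdiv_lt_0_compat; nra).
  assert (HP : exists psi, forall ts, near_mod psi ts (Del/4) -> GoalT kap g B th Del ts).
  { destruct (classic (exists n : Z, Rabs (th (0,0,0)%nat - IZR n * (PI/3)) < kap)) as [[n Hn]|NH].
    - eapply B_main; eauto.
      exists n. exists 0%Z. replace (th (0%nat, 0%nat, 0%nat) - IZR n * (PI / 3) - 2 * PI * IZR 0) with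
        (th (0%nat, 0%nat, 0%nat) - IZR n * (PI / 3)) by (simpl; ring). auto.
    - eapply A_main; eauto.
      intro n. destruct (Rle_dec kap (Rabs (th (0,0,0)%nat - IZR n * (PI/3)))) as [X|X]; auto.
      exfalso. apply NH. exists n. lra. }
  destruct HP as [psi HP].
  destruct (SEL s Del th0 psi HDp Hs) as [i [Hi Hn]].
  exists i. split; auto. apply HP; auto.
Qed.
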